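(* The map $(f_n)^\bullet\mapsto f_\mathcal U$, where $f_\mathcal U(t):=\lim_{n,\mathcal U}f_n(t)$, is a well-defined surjective $*$-homomorphism $A^{c\mathcal U}\to C_b(X)$ with kernel exactly $I$. Consequently it induces a $*$-isomorphism $\Phi:A^{c\mathcal U}/I\to C_b(X)$ satisfying $\Phi(q(\Delta(a)))=a$ for all $a\in A$. In particular the Gelfand spectrum of $A^{c\mathcal U}/I$ is the Stone–Čech compactification $\beta X$.
   Context: $X$ is a second countable, locally compact space with basepoint $o$ and a fixed compatible proper metric $d$; $B(r)$ is the closed ball of radius $r$ about $o$. $A=C_0(X)$ and $C_b(X)$ is the $\mathrm{C}^*$-algebra of bounded continuous complex functions on $X$. $\mathcal U$ is a nonprincipal ultrafilter on $\mathbb N$, and $A^\mathcal U=\ell^\infty(A)/\{(f_n):\lim_{n,\mathcal U}\|f_n\|=0\}$ is the ultrapower, with $(f_n)^\bullet$ the class of $(f_n)$. A sequence $(f_n)\in\ell^\infty(A)$ is $\mathcal U$-equicontinuous on bounded sets if for every $r,\epsilon>0$ there is $\delta>0$ such that for a set of $n$ belonging to $\mathcal U$, $|f_n(s)-f_n(t)|\le\epsilon$ for all $s,t\in B(r)$ with $d(s,t)<\delta$; $A^{c\mathcal U}$ is the $\mathrm{C}^*$-subalgebra of $A^\mathcal U$ of classes of such sequences. $I:=\{(f_n)^\bullet\in A^\mathcal U:\exists r_n\in\mathbb R \text{ with } \lim_{n,\mathcal U}r_n=+\infty \text{ and } f_n|_{B(r_n)}\equiv 0\}$, a closed ideal contained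 in $A^{c\mathcal U}$. $q:A^{c\mathcal U}\to A^{c\mathcal U}/I$ is the quotient map and $\Delta(a)=(a,a,\dots)^\bullet$. *)

(* Defs.v *)
From Stdlib Require Import Reals ClassicalEpsilon.
Open Scope R_scope.

Definition Cx := (R * R)%type.
Definition C0 : Cx := (0, 0).
Definition Cadd (z w : Cx) : Cx := (fst z + fst w, snd z + snd w).
Definition Copp (z : Cx) : Cx := (- fst z, - snd z).
Definition Csub (z w : Cx) : Cx := Cadd z (Copp w).
Definition Cmul (z w : Cx) : Cx :=
  (fst z * fst w - snd z * snd w, fst z * snd w + snd z * fst w).
Definition Cconj (z : Cx) : Cx := (fst z, - snd z).
Definition Cnorm (z : Cx) : R := sqrt (fst z * fst z + snd z * snd z).

Definition is_metric {X : Type} (d : X -> X -> R) : Prop :=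
  (forall x y, d x y = 0 <-> x = y) /\
  (forall x y, d x y = d y x) /\
  (forall x y z, d x z <= d x y + d y z).

Definition converges {X : Type} (d : X -> X -> R) (x : nat -> X) (l : X) : Prop :=
  forall eps, 0 < eps -> exists N, forall n, (N <= n)%nat -> d (x n) l < eps.

Definition compact_set {X : Type} (d : X -> X -> R) (K : X -> Prop) : Prop :=
  forall x : nat -> X, (forall n, K (x n)) ->
  exists phi : nat -> nat, (forall n, (phi n < phi (S n))%nat) /\
  exists l, K l /\ converges d (fun n => x (phi n)) l.

Definition ball {X : Type} (d : X -> X -> R) (o : X) (r : R) : X -> Prop :=
  fun x => d o x <= r.

Definition is_proper_metric {X : Type} (d : X -> X -> R) : Prop :=
  is_metric d /\ forall (o : X) (r : R), compact_set d (ball d o r).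

Definition continuous_fun {X : Type} (d : X -> X -> R) (f : X -> Cx) : Prop :=
  forall x eps, 0 < eps -> exists delta, 0 < delta /\
    forall y, d x y < delta -> Cnorm (Csub (f y) (f x)) < eps.

Definition in_C0 {X : Type} (d : X -> X -> R) (f : X -> Cx) : Prop :=
  continuous_fun d f /\
  forall eps, 0 < eps -> exists K, compact_set d K /\
    forall x, ~ K x -> Cnorm (f x) < eps.

Definition in_Cb {X : Type} (d : X -> X -> R) (f : X -> Cx) : Prop :=
  continuous_fun d f /\ exists M, forall x, Cnorm (f x) <= M.

Definition is_nonprincipal_ultrafilter (U : (nat -> Prop) -> Prop) : Prop :=
  U (fun _ => True) /\
  ~ U (fun _ => False) /\
  (forall A B, U A -> U B -> U (fun n => A n /\ B n)) /\
  (forall A B : nat -> Prop, (forall n, A n -> B n) -> U A -> U B) /\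
  (forall A : nat -> Prop, U A \/ U (fun n => ~ A n)) /\
  (forall m : nat, ~ U (fun n => n = m)).

Definition is_ulim (U : (nat -> Prop) -> Prop) (z : nat -> Cx) (L : Cx) : Prop :=
  forall eps, 0 < eps -> U (fun n => Cnorm (Csub (z n) L) < eps).

Definition ulim_infty (U : (nat -> Prop) -> Prop) (r : nat -> R) : Prop :=
  forall M, U (fun n => M <= r n).

(* the chosen U-limit (meaningful when it exists) *)
Definition ulim (U : (nat -> Prop) -> Prop) (z : nat -> Cx) : Cx :=
  epsilon (inhabits C0) (fun L => is_ulim U z L).

Definition fU {X : Type} (U : (nat -> Prop) -> Prop) (f : nat -> X -> Cx) : X -> Cx :=
  fun t => ulim U (fun n => f n t).

Definition in_linfA {X : Type} (d : X -> X -> R) (f : nat -> X -> Cx) : Prop :=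
  (forall n, in_C0 d (f n)) /\ exists M, forall n x, Cnorm (f n x) <= M.

(* lim_{n,U} ||f_n - g_n|| = 0 : f and g define the same element of A^U *)
Definition ueq {X : Type} (U : (nat -> Prop) -> Prop) (f g : nat -> X -> Cx) : Prop :=
  forall eps, 0 < eps -> U (fun n => forall x, Cnorm (Csub (f n x) (g n x)) <= eps).

Definition U_equicont {X : Type} (d : X -> X -> R) (o : X)
  (U : (nat -> Prop) -> Prop) (f : nat -> X -> Cx) : Prop :=
  forall r eps, 0 < r -> 0 < eps -> exists delta, 0 < delta /\
    U (fun n => forall s t, ball d o r s -> ball d o r t -> d s t < delta ->
                  Cnorm (Csub (f n s) (f n t)) <= eps).

(* g is a representative of a class belonging to A^{cU} *)
Definition rep_AcU {X : Type} (d : X -> X -> R) (o : X)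
  (U : (nat -> Prop) -> Prop) (g : nat -> X -> Cx) : Prop :=
  in_linfA d g /\ exists f, in_linfA d f /\ U_equicont d o U f /\ ueq U f g.

(* the class of g belongs to the ideal I *)
Definition rep_I {X : Type} (d : X -> X -> R) (o : X)
  (U : (nat -> Prop) -> Prop) (g : nat -> X -> Cx) : Prop :=
  in_linfA d g /\ exists f, in_linfA d f /\ ueq U f g /\
    exists r : nat -> R, ulim_infty U r /\
      forall n x, ball d o (r n) x -> f n x = C0.

Definition sadd {X : Type} (f g : nat -> X -> Cx) := fun n x => Cadd (f n x) (g n x).
Definition smul {X : Type} (f g : nat -> X -> Cx) := fun n x => Cmul (f n x) (g n x).
Definition sscal {X : Type} (l : Cx) (f : nat -> X -> Cx) := fun n x => Cmul l (f n x).
Definition sstar {X : Type} (f : nat -> X -> Cx) := fun n x => Cconj (f n x).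

(* Main.v *)
Require Import Defs.
From Stdlib Require Import Reals Lra Lia ClassicalEpsilon Classical FunctionalExtensionality List.
From Coquelicot Require Complex.
Open Scope R_scope.

Lemma Cnorm_Cmod z : Cnorm z = Complex.Cmod z.
Proof. unfold Cnorm, Complex.Cmod. f_equal. simpl. ring. Qed.

Lemma Cnorm_ge0 z : 0 <= Cnorm z.
Proof. rewrite Cnorm_Cmod. apply Complex.Cmod_ge_0. Qed.

Lemma Cnorm_add a b : Cnorm (Cadd a b) <= Cnorm a + Cnorm b.
Proof. rewrite !Cnorm_Cmod. apply (Complex.Cmod_triangle a b). Qed.

Lemma Cnorm_mul a b : Cnorm (Cmul a b) = Cnorm a * Cnorm b.
Proof. rewrite !Cnorm_Cmod. apply (Complex.Cmod_mult a b). Qed.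

Lemma Cnorm_opp a : Cnorm (Copp a) = Cnorm a.
Proof. rewrite !Cnorm_Cmod. apply (Complex.Cmod_opp a). Qed.

Lemma Cnorm_conj a : Cnorm (Cconj a) = Cnorm a.
Proof. rewrite !Cnorm_Cmod. apply (Complex.Cmod_conj a). Qed.

Lemma Cnorm_C0 : Cnorm C0 = 0.
Proof. unfold Cnorm, C0; simpl. replace (0*0+0*0) with 0 by ring. apply sqrt_0. Qed.

Lemma Cnorm_eq0 z : Cnorm z = 0 -> z = C0.
Proof. rewrite Cnorm_Cmod. intro H. apply Complex.Cmod_eq_0 in H. exact H. Qed.

Lemma Csub_same a : Csub a a = C0.
Proof. destruct a; unfold Csub, Cadd, Copp, C0; simpl; f_equal; ring. Qed.

Lemma Csub_C0 a : Csub a C0 = a.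
Proof. destruct a; unfold Csub, Cadd, Copp, C0; simpl; f_equal; ring. Qed.

Lemma Cnorm_sub_sym a b : Cnorm (Csub a b) = Cnorm (Csub b a).
Proof.
  replace (Csub b a) with (Copp (Csub a b)). apply eq_sym, Cnorm_opp.
  destruct a, b; unfold Csub, Cadd, Copp; simpl; f_equal; ring.
Qed.

Lemma Cnorm_sub_tri a b c : Cnorm (Csub a c) <= Cnorm (Csub a b) + Cnorm (Csub b c).
Proof.
  replace (Csub a c) with (Cadd (Csub a b) (Csub b c)). apply Cnorm_add.
  destruct a, b, c; unfold Csub, Cadd, Copp; simpl; f_equal; ring.
Qed.

Lemma Cnorm_sub_le a b : Cnorm a <= Cnorm (Csub a b) + Cnorm b.
Proof. pose proof (Cnorm_sub_tri a b C0). rewrite !Csub_C0 in H. exact H. Qed.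

Lemma Cnorm_sub_small a b : (forall e, 0 < e -> Cnorm (Csub a b) <= e) -> a = b.
Proof.
  intro H. assert (Cnorm (Csub a b) = 0).
  { destruct (Cnorm_ge0 (Csub a b)) as [Hp|Hp]; [|auto].
    assert (0 < Cnorm (Csub a b) / 2) by lra. specialize (H _ H0). lra. }
  apply Cnorm_eq0 in H0. destruct a, b; unfold Csub, Cadd, Copp, C0 in *; simpl in *.
  injection H0; intros; f_equal; lra.
Qed.

Definition Rsc (c : R) (z : Cx) : Cx := (c * fst z, c * snd z).

Lemma Cnorm_Rsc c z : Cnorm (Rsc c z) = Rabs c * Cnorm z.
Proof.
  unfold Cnorm, Rsc; simpl.
  replace (c * fst z * (c * fst z) + c * snd z * (c * snd z)) with
    ((c*c) * (fst z * fst z + snd z * snd z)) by ring.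
  rewrite sqrt_mult_alt by nra. rewrite <- sqrt_Rsqr_abs. reflexivity.
Qed.

Lemma Cnorm_fst z : Rabs (fst z) <= Cnorm z.
Proof. rewrite Cnorm_Cmod. apply (Complex.re_le_Cmod z). Qed.

Lemma Cnorm_snd z : Rabs (snd z) <= Cnorm z.
Proof.
  unfold Cnorm. rewrite <- sqrt_Rsqr_abs. apply sqrt_le_1_alt. unfold Rsqr. nra.
Qed.

Lemma Cnorm_le_comp z : Cnorm z <= Rabs (fst z) + Rabs (snd z).
Proof.
  unfold Cnorm. rewrite <- (sqrt_Rsqr (Rabs (fst z) + Rabs (snd z))).
  2:{ pose proof (Rabs_pos (fst z)); pose proof (Rabs_pos (snd z)); lra. }
  apply sqrt_le_1_alt. unfold Rsqr.
  pose proof (Rabs_pos (fst z)); pose proof (Rabs_pos (snd z)).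
  replace (fst z * fst z) with (Rabs (fst z) * Rabs (fst z)).
  replace (snd z * snd z) with (Rabs (snd z) * Rabs (snd z)). nra.
  all: rewrite <- Rabs_mult; apply Rabs_pos_eq; nra.
Qed.

Lemma Rabs_bnd x M : Rabs x <= M -> - M <= x <= M.
Proof. unfold Rabs; destruct (Rcase_abs x); lra. Qed.

Notation UFt U := (is_nonprincipal_ultrafilter U).

Lemma U_mono U (HU : UFt U) (A B : nat -> Prop) : U A -> (forall n, A n -> B n) -> U B.
Proof. intros HA H. destruct HU as (_&_&_&Hm&_). exact (Hm A B H HA). Qed.

Lemma U_and U (HU : UFt U) (A B : nat -> Prop) : U A -> U B -> U (fun n => A n /\ B n).
Proof. destruct HU as (_&_&Ha&_). apply Ha. Qed.

Lemma U_and3 U (HU : UFt U) (A B C : nat -> Prop) : U A -> U B -> U C ->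
  U (fun n => A n /\ B n /\ C n).
Proof. intros. apply U_and; auto. apply U_and; auto. Qed.

Lemma U_true U (HU : UFt U) (A : nat -> Prop) : (forall n, A n) -> U A.
Proof. intro H. pose proof HU as HU2. destruct HU2 as (Ht&_). eapply U_mono; [exact HU|exact Ht|]. intros; auto. Qed.

Lemma U_ex U (HU : UFt U) (A : nat -> Prop) : U A -> exists n, A n.
Proof.
  intro H. apply NNPP. intro Hn. destruct HU as (_&Hf&_&Hm&_). apply Hf.
  apply (Hm A); auto. intros n Hn'. apply Hn. eauto.
Qed.

Lemma U_not U (HU : UFt U) (A : nat -> Prop) : ~ U A -> U (fun n => ~ A n).
Proof. intro H. destruct HU as (_&_&_&_&Hu&_). destruct (Hu A); tauto. Qed.

Lemma U_ge U (HU : UFt U) (N : nat) : U (fun n => (N <= n)%nat).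
Proof.
  induction N.
  - apply U_true; auto. intros; lia.
  - assert (U (fun n => n <> N)).
    { apply U_not; auto. destruct HU as (_&_&_&_&_&Hp). apply Hp. }
    eapply U_mono; [auto| apply (U_and U HU _ _ IHN H)|]. simpl. intros n [H1 H2]. lia.
Qed.

Lemma U_geR U (HU : UFt U) (M : R) : U (fun n => M <= INR n).
Proof.
  destruct (INR_unbounded M) as [N HN].
  eapply U_mono; [auto|apply (U_ge U HU N)|]. intros n Hn. apply le_INR in Hn. lra.
Qed.

Lemma ulim_le U (HU : UFt U) (a b : nat -> Cx) A B e :
  is_ulim U a A -> is_ulim U b B -> U (fun n => Cnorm (Csub (a n) (b n)) <= e) ->
  Cnorm (Csub A B) <= e.
Proof.
  intros HA HB He. apply Rnot_lt_le. intro Hlt.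
  set (eta := (Cnorm (Csub A B) - e) / 2).
  assert (Heta : 0 < eta) by (unfold eta; lra).
  destruct (U_ex U HU _ (U_and3 U HU _ _ _ (HA _ Heta) (HB _ Heta) He)) as [n (H1&H2&H3)].
  pose proof (Cnorm_sub_tri A (a n) B). pose proof (Cnorm_sub_tri (a n) (b n) B).
  rewrite Cnorm_sub_sym in H1. unfold eta in *. lra.
Qed.

Lemma ulim_unique U (HU : UFt U) z L1 L2 : is_ulim U z L1 -> is_ulim U z L2 -> L1 = L2.
Proof.
  intros H1 H2. apply Cnorm_sub_small. intros e He.
  apply (ulim_le U HU z z); auto. apply U_true; auto. intro n. rewrite Csub_same, Cnorm_C0. lra.
Qed.

Lemma ulim_spec U (HU : UFt U) z L : is_ulim U z L -> ulim U z = L.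
Proof.
  intro H. unfold ulim. apply (ulim_unique U HU z); auto.
  apply epsilon_spec. eauto.
Qed.

Lemma is_ulim_const U (HU : UFt U) c : is_ulim U (fun _ => c) c.
Proof. intros e He. apply U_true; auto. intro. rewrite Csub_same, Cnorm_C0. lra. Qed.

Lemma is_ulim_ueq U (HU : UFt U) (a b : nat -> Cx) B :
  (forall e, 0 < e -> U (fun n => Cnorm (Csub (a n) (b n)) <= e)) -> is_ulim U b B -> is_ulim U a B.
Proof.
  intros Hab HB e He. eapply U_mono; [auto| apply (U_and U HU _ _ (Hab (e/2) ltac:(lra)) (HB (e/2) ltac:(lra)))|].
  intros n [H1 H2]. pose proof (Cnorm_sub_tri (a n) (b n) B). lra.
Qed.

Lemma is_ulim_ev U (HU : UFt U) (a : nat -> Cx) B :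
  U (fun n => a n = B) -> is_ulim U a B.
Proof.
  intros H e He. eapply U_mono; [auto|apply H|]. intros n ->. rewrite Csub_same, Cnorm_C0. lra.
Qed.

Lemma is_ulim_add U (HU : UFt U) a b A B : is_ulim U a A -> is_ulim U b B ->
  is_ulim U (fun n => Cadd (a n) (b n)) (Cadd A B).
Proof.
  intros HA HB e He. eapply U_mono; [auto| apply (U_and U HU _ _ (HA (e/2) ltac:(lra)) (HB (e/2) ltac:(lra)))|].
  intros n [H1 H2].
  replace (Csub (Cadd (a n) (b n)) (Cadd A B)) with (Cadd (Csub (a n) A) (Csub (b n) B)).
  pose proof (Cnorm_add (Csub (a n) A) (Csub (b n) B)). lra.
  destruct (a n), (b n), A, B; unfold Csub, Cadd, Copp; simpl; f_equal; ring.
Qed.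

Lemma is_ulim_conj U (HU : UFt U) a A : is_ulim U a A ->
  is_ulim U (fun n => Cconj (a n)) (Cconj A).
Proof.
  intros HA e He. eapply U_mono; [auto|apply (HA e He)|]. intros n H.
  replace (Csub (Cconj (a n)) (Cconj A)) with (Cconj (Csub (a n) A)). rewrite Cnorm_conj; auto.
  destruct (a n), A; unfold Csub, Cadd, Copp, Cconj; simpl; f_equal; ring.
Qed.

Lemma is_ulim_mul U (HU : UFt U) a b A B M : (forall n, Cnorm (a n) <= M) ->
  is_ulim U a A -> is_ulim U b B ->
  is_ulim U (fun n => Cmul (a n) (b n)) (Cmul A B).
Proof.
  intros Hb HA HB e He.
  assert (HM : 0 <= M) by (pose proof (Cnorm_ge0 (a 0%nat)); specialize (Hb 0%nat); lra).
  pose proof (Cnorm_ge0 B).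
  set (e1 := e / (2 * (M + 1))). set (e2 := e / (2 * (Cnorm B + 1))).
  assert (0 < e1) by (unfold e1; apply Rdiv_lt_0_compat; lra).
  assert (0 < e2) by (unfold e2; apply Rdiv_lt_0_compat; lra).
  eapply U_mono; [auto| apply (U_and U HU _ _ (HA e2 H1) (HB e1 H0))|].
  intros n [H3 H4].
  replace (Csub (Cmul (a n) (b n)) (Cmul A B)) with
    (Cadd (Cmul (a n) (Csub (b n) B)) (Cmul (Csub (a n) A) B)).
  2:{ destruct (a n), (b n), A, B; unfold Csub, Cadd, Copp, Cmul; simpl; f_equal; ring. }
  eapply Rle_lt_trans; [apply Cnorm_add|]. rewrite !Cnorm_mul.
  specialize (Hb n). pose proof (Cnorm_ge0 (a n)). pose proof (Cnorm_ge0 (Csub (b n) B)).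
  pose proof (Cnorm_ge0 (Csub (a n) A)).
  assert (Cnorm (a n) * Cnorm (Csub (b n) B) <= M * e1) by (apply Rmult_le_compat; lra).
  assert (Cnorm (Csub (a n) A) * Cnorm B <= e2 * Cnorm B) by (apply Rmult_le_compat; lra).
  assert (M * e1 < e / 2).
  { unfold e1. apply (Rmult_lt_reg_r (2 * (M+1))). lra. field_simplify; lra. }
  assert (e2 * Cnorm B < e / 2).
  { unfold e2. apply (Rmult_lt_reg_r (2 * (Cnorm B+1))). lra. field_simplify; lra. }
  lra.
Qed.

Lemma ulimR_exists U (HU : UFt U) (z : nat -> R) M : (forall n, Rabs (z n) <= M) ->
  exists L, forall e, 0 < e -> U (fun n => Rabs (z n - L) < e).
Proof.
  intro Hb.
  set (E := fun a => U (fun n => a <= z n)).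
  assert (HE1 : E (- M)).
  { unfold E. apply U_true; auto. intro n. specialize (Hb n). apply Rabs_bnd in Hb. lra. }
  assert (HE2 : bound E).
  { exists (M + 1). intros a Ha. apply Rnot_lt_le. intro Hlt.
    destruct (U_ex U HU _ Ha) as [n Hn]. specialize (Hb n). apply Rabs_bnd in Hb. lra. }
  destruct (completeness E HE2 (ex_intro _ _ HE1)) as [L [Hub Hl]].
  exists L. intros e He.
  assert (U (fun n => L - e < z n)).
  { apply NNPP. intro Hn.
    assert (forall a, E a -> a <= L - e).
    { intros a Ha. apply Rnot_lt_le. intro Hlt. apply Hn.
      eapply U_mono; [auto|apply Ha|]. simpl. intros; lra. }
    specialize (Hl (L - e) H). lra. }
  assert (U (fun n => z n < L + e)).
  { apply NNPP. intro Hn. apply U_not in Hn; auto.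
    assert (E (L + e)). { unfold E. eapply U_mono; [auto|apply Hn|]. simpl; intros; lra. }
    specialize (Hub _ H0). lra. }
  eapply U_mono; [auto|apply (U_and U HU _ _ H H0)|]. intros n [H1 H2].
  apply Rabs_def1; lra.
Qed.

Lemma ulim_exists U (HU : UFt U) (z : nat -> Cx) M : (forall n, Cnorm (z n) <= M) ->
  exists L, is_ulim U z L.
Proof.
  intro Hb.
  destruct (ulimR_exists U HU (fun n => fst (z n)) M) as [L1 H1].
  { intro n. eapply Rle_trans; [apply Cnorm_fst|auto]. }
  destruct (ulimR_exists U HU (fun n => snd (z n)) M) as [L2 H2].
  { intro n. eapply Rle_trans; [apply Cnorm_snd|auto]. }
  exists (L1, L2). intros e He.
  eapply U_mono; [auto|apply (U_and U HU _ _ (H1 (e/2) ltac:(lra)) (H2 (e/2) ltac:(lra)))|].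
  intros n [Ha Hb'].
  eapply Rle_lt_trans; [apply Cnorm_le_comp|]. unfold Csub, Cadd, Copp; simpl. unfold Rminus in *. lra.
Qed.

Lemma ulim_bound U (HU : UFt U) (z : nat -> Cx) L M : (forall n, Cnorm (z n) <= M) ->
  is_ulim U z L -> Cnorm L <= M.
Proof.
  intros Hb HL. apply Rnot_lt_le. intro Hlt.
  destruct (U_ex U HU _ (HL (Cnorm L - M) ltac:(lra))) as [n Hn].
  pose proof (Cnorm_sub_le L (z n)). rewrite Cnorm_sub_sym in Hn. specialize (Hb n). lra.
Qed.

Lemma choice_nat {A : Type} (P : nat -> A -> Prop) :
  (forall m, exists p, P m p) -> exists f : nat -> A, forall m, P m (f m).
Proof.
  intro H. exists (fun m => proj1_sig (constructive_indefinite_description _ (H m))).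
  intro m. exact (proj2_sig (constructive_indefinite_description _ (H m))).
Qed.

Section M.
Context {X : Type}.

Lemma d_refl (d : X -> X -> R) : is_metric d -> forall x, d x x = 0.
Proof. intros (H1&_) x. apply H1. auto. Qed.
Lemma d_sym (d : X -> X -> R) : is_metric d -> forall x y, d x y = d y x.
Proof. intros (_&H&_). auto. Qed.
Lemma d_tri (d : X -> X -> R) : is_metric d -> forall x y z, d x z <= d x y + d y z.
Proof. intros (_&_&H). auto. Qed.
Lemma d_pos (d : X -> X -> R) : is_metric d -> forall x y, 0 <= d x y.
Proof. intros Hm x y. pose proof (d_tri d Hm x y x). rewrite (d_refl d Hm) in H.
  rewrite (d_sym d Hm y x) in H. lra. Qed.

Lemma phi_ge (phi : nat -> nat) : (forall n, (phi n < phi (S n))%nat) -> forall n, (n <= phi n)%nat.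
Proof. intros H n. induction n. lia. specialize (H n). lia. Qed.

Lemma arch_inv (delta : R) : 0 < delta -> exists K : nat, forall m, (K <= m)%nat -> / (INR m + 1) < delta.
Proof.
  intro Hd. destruct (INR_unbounded (/ delta)) as [K HK]. exists K. intros m Hm.
  apply le_INR in Hm. pose proof (pos_INR m).
  apply (Rmult_lt_reg_l (INR m + 1)). lra. rewrite Rinv_r by lra.
  apply (Rmult_lt_reg_l (/ delta)). apply Rinv_0_lt_compat; lra.
  rewrite Rmult_1_r. replace (/ delta * ((INR m + 1) * delta)) with (INR m + 1). lra.
  field. lra.
Qed.

Lemma unif_cont (d : X -> X -> R) (K : X -> Prop) (h : X -> Cx) :
  is_metric d -> compact_set d K -> continuous_fun d h ->
  forall eps, 0 < eps -> exists delta, 0 < delta /\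
    forall s t, K s -> K t -> d s t < delta -> Cnorm (Csub (h s) (h t)) <= eps.
Proof.
  intros Hm HK Hc eps He. apply NNPP. intro Hn.
  assert (forall m : nat, exists p : X * X, K (fst p) /\ K (snd p) /\
            d (fst p) (snd p) < / (INR m + 1) /\ eps < Cnorm (Csub (h (fst p)) (h (snd p)))).
  { intro m. apply NNPP. intro Hn2. apply Hn. exists (/ (INR m + 1)). split.
    { apply Rinv_0_lt_compat. pose proof (pos_INR m). lra. }
    intros s t Hs Ht Hd. apply Rnot_lt_le. intro Hlt. apply Hn2. exists (s, t). simpl. auto. }
  apply choice_nat in H as [p Hp].
  destruct (HK (fun m => fst (p m))) as [phi [Hphi [l [Hl Hconv]]]].
  { intro m. apply Hp. }
  destruct (Hc l (eps / 2) ltac:(lra)) as [delta [Hdel Hcd]].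
  destruct (Hconv (delta / 2) ltac:(lra)) as [N HN].
  destruct (arch_inv (delta / 2) ltac:(lra)) as [K2 HK2].
  set (m := Nat.max N K2).
  specialize (HN m ltac:(unfold m; lia)). cbv beta in HN.
  rewrite (d_sym d Hm) in HN.
  assert (Hm2 : (K2 <= phi m)%nat).
  { pose proof (phi_ge phi Hphi m). assert (K2 <= m)%nat by (unfold m; lia). lia. }
  specialize (HK2 (phi m) Hm2).
  destruct (Hp (phi m)) as (_&_&Hd&Hbig).
  assert (H1 : d l (fst (p (phi m))) < delta) by lra.
  assert (H2 : d l (snd (p (phi m))) < delta).
  { pose proof (d_tri d Hm l (fst (p (phi m))) (snd (p (phi m)))). lra. }
  apply Hcd in H1. apply Hcd in H2.
  pose proof (Cnorm_sub_tri (h (fst (p (phi m)))) (h l) (h (snd (p (phi m))))).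
  rewrite (Cnorm_sub_sym (h l)) in H. lra.
Qed.

Lemma bdd_compact (d : X -> X -> R) (K : X -> Prop) (h : X -> Cx) :
  is_metric d -> compact_set d K -> continuous_fun d h ->
  exists M, forall x, K x -> Cnorm (h x) <= M.
Proof.
  intros Hm HK Hc. apply NNPP. intro Hn.
  assert (forall m : nat, exists x, K x /\ INR m < Cnorm (h x)).
  { intro m. apply NNPP. intro Hn2. apply Hn. exists (INR m). intros x Hx.
    apply Rnot_lt_le. intro. apply Hn2. eauto. }
  apply choice_nat in H as [p Hp].
  destruct (HK p) as [phi [Hphi [l [Hl Hconv]]]]. { intro m. apply Hp. }
  destruct (Hc l 1 ltac:(lra)) as [delta [Hdel Hcd]].
  destruct (Hconv delta Hdel) as [N HN].
  destruct (INR_unbounded (Cnorm (h l) + 1)) as [K2 HK2].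
  set (m := Nat.max N K2).
  specialize (HN m ltac:(unfold m; lia)).
  assert (Hle : (K2 <= phi m)%nat).
  { pose proof (phi_ge phi Hphi m). assert (K2 <= m)%nat by (unfold m; lia). lia. }
  apply le_INR in Hle.
  destruct (Hp (phi m)) as [_ Hbig].
  rewrite (d_sym d Hm) in HN. apply Hcd in HN.
  pose proof (Cnorm_sub_le (h (p (phi m))) (h l)). lra.
Qed.

Lemma tot_bdd (d : X -> X -> R) (K : X -> Prop) (x0 : X) :
  is_metric d -> compact_set d K -> forall delta, 0 < delta ->
  exists L : list X, (forall c, In c L -> K c) /\
    forall x, K x -> exists c, In c L /\ d x c < delta.
Proof.
  intros Hm HK delta Hd. apply NNPP. intro Hn.
  assert (Hstep : forall L : list X, (forall c, In c L -> K c) ->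
            exists x, K x /\ forall c, In c L -> delta <= d x c).
  { intros L HL. apply NNPP. intro Hn2. apply Hn. exists L. split; auto.
    intros x Hx. apply NNPP. intro Hn3. apply Hn2. exists x. split; auto.
    intros c Hc. apply Rnot_lt_le. intro. apply Hn3. eauto. }
  set (pick := fun L : list X => epsilon (inhabits x0)
      (fun x => K x /\ forall c, In c L -> delta <= d x c)).
  assert (Hpick : forall L, (forall c, In c L -> K c) ->
            K (pick L) /\ forall c, In c L -> delta <= d (pick L) c).
  { intros L HL. unfold pick. apply epsilon_spec. apply Hstep; auto. }
  set (build := fix build (n : nat) : list X :=
      match n with O => nil | S n => pick (build n) :: build n end).
  assert (Hb : forall n, forall c, In c (build n) -> K c).
  { induction n; simpl; intros c Hc. destruct Hc. destruct Hc as [<-|Hc].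
    apply Hpick; auto. auto. }
  set (x := fun n => pick (build n)).
  assert (Hin : forall m n, (m < n)%nat -> In (x m) (build n)).
  { intros m n Hmn. induction n. lia. simpl. destruct (Nat.eq_dec m n) as [->|Hne].
    left; auto. right. apply IHn. lia. }
  assert (Hsep : forall m n, (m < n)%nat -> delta <= d (x n) (x m)).
  { intros m n Hmn. apply (proj2 (Hpick _ (Hb n))). apply Hin; auto. }
  destruct (HK x) as [phi [Hphi [l [Hl Hconv]]]]. { intro n. apply Hpick, Hb. }
  destruct (Hconv (delta / 2) ltac:(lra)) as [N HN].
  pose proof (HN N (le_n _)). pose proof (HN (S N) (le_S _ _ (le_n _))).
  pose proof (Hsep _ _ (Hphi N)).
  pose proof (d_tri d Hm (x (phi (S N))) l (x (phi N))).
  rewrite (d_sym d Hm l) in H2. lra.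
Qed.

End M.

Lemma U_list U (HU : UFt U) {X : Type} (L : list X) (P : X -> nat -> Prop) :
  (forall c, In c L -> U (P c)) -> U (fun n => forall c, In c L -> P c n).
Proof.
  induction L as [|a L IH]; intro H.
  - apply U_true; auto. intros n c [].
  - eapply U_mono; [auto| apply (U_and U HU _ _ (H a (or_introl eq_refl)) (IH (fun c Hc => H c (or_intror Hc))))|].
    intros n [H1 H2] c [<-|Hc]; auto.
Qed.

Section P.
Context {X : Type} (d : X -> X -> R) (o : X) (U : (nat -> Prop) -> Prop).

Lemma linf_lim (g : nat -> X -> Cx) (HU : UFt U) : in_linfA d g ->
  forall t, is_ulim U (fun n => g n t) (fU U g t).
Proof.
  intros [_ [M HM]] t. destruct (ulim_exists U HU (fun n => g n t) M) as [L HL].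
  { intro n; apply HM. }
  unfold fU. rewrite (ulim_spec U HU _ L HL). exact HL.
Qed.

Lemma equi_est (g : nat -> X -> Cx) (HU : UFt U) (Hm : is_metric d) : rep_AcU d o U g ->
  forall t eps, 0 < eps -> exists delta, 0 < delta /\ forall y, d t y < delta ->
    U (fun n => Cnorm (Csub (g n y) (g n t)) <= eps).
Proof.
  intros [_ [f [_ [Heq Hue]]]] t eps He.
  pose proof (d_pos d Hm o t).
  destruct (Heq (d o t + 1) (eps / 3) ltac:(lra) ltac:(lra)) as [d0 [Hd0 HE]].
  exists (Rmin d0 1). split. { apply Rmin_pos; lra. }
  intros y Hy. pose proof (Rmin_l d0 1). pose proof (Rmin_r d0 1).
  eapply U_mono; [auto| apply (U_and U HU _ _ HE (Hue (eps/3) ltac:(lra)))|].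
  intros n [H1' H2'].
  assert (Hy' : ball d o (d o t + 1) y).
  { unfold ball. pose proof (d_tri d Hm o t y). lra. }
  assert (Ht' : ball d o (d o t + 1) t). { unfold ball. lra. }
  rewrite (d_sym d Hm) in Hy.
  specialize (H1' y t Hy' Ht' ltac:(lra)).
  pose proof (H2' y) as H3. pose proof (H2' t) as H4.
  pose proof (Cnorm_sub_tri (g n y) (f n y) (g n t)).
  pose proof (Cnorm_sub_tri (f n y) (f n t) (g n t)).
  rewrite Cnorm_sub_sym in H3. lra.
Qed.

Lemma part1 (g : nat -> X -> Cx) (HU : UFt U) (Hm : is_metric d) : rep_AcU d o U g ->
  (forall t, is_ulim U (fun n => g n t) (fU U g t)) /\ in_Cb d (fU U g).
Proof.
  intro Hg. pose proof (linf_lim g HU (proj1 Hg)) as Hl. split; auto. split.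
  - intros t eps He. destruct (equi_est g HU Hm Hg t (eps/2) ltac:(lra)) as [delta [Hd Hy]].
    exists delta. split; auto. intros y Hdy.
    pose proof (ulim_le U HU _ _ _ _ _ (Hl y) (Hl t) (Hy y Hdy)). lra.
  - destruct Hg as [[_ [M HM]] _]. exists M. intro x.
    apply (ulim_bound U HU (fun n => g n x)); auto.
Qed.

Lemma part2 (g1 g2 : nat -> X -> Cx) (HU : UFt U) : rep_AcU d o U g1 -> rep_AcU d o U g2 ->
  ueq U g1 g2 -> fU U g1 = fU U g2.
Proof.
  intros H1 H2 H. apply functional_extensionality. intro t.
  apply Cnorm_sub_small. intros e He.
  apply (ulim_le U HU _ _ _ _ _ (linf_lim g1 HU (proj1 H1) t) (linf_lim g2 HU (proj1 H2) t)).
  eapply U_mono; [auto|apply (H e He)|]. simpl. auto.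
Qed.

Lemma part3 (g1 g2 : nat -> X -> Cx) (HU : UFt U) : rep_AcU d o U g1 -> rep_AcU d o U g2 ->
     fU U (sadd g1 g2) = (fun t => Cadd (fU U g1 t) (fU U g2 t)) /\
     fU U (smul g1 g2) = (fun t => Cmul (fU U g1 t) (fU U g2 t)).
Proof.
  intros H1 H2. pose proof (linf_lim g1 HU (proj1 H1)) as L1.
  pose proof (linf_lim g2 HU (proj1 H2)) as L2.
  split; apply functional_extensionality; intro t; unfold fU at 1; apply ulim_spec; auto.
  - apply is_ulim_add; auto.
  - destruct H1 as [[_ [M HM]] _]. apply (is_ulim_mul U HU _ _ _ _ M); auto.
Qed.

Lemma part4 (l : Cx) (g : nat -> X -> Cx) (HU : UFt U) : rep_AcU d o U g ->
     fU U (sscal l g) = (fun t => Cmul l (fU U g t)).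
Proof.
  intros H1. pose proof (linf_lim g HU (proj1 H1)) as L1.
  apply functional_extensionality; intro t; unfold fU at 1; apply ulim_spec; auto.
  apply (is_ulim_mul U HU _ _ _ _ (Cnorm l)); auto. intro; lra. apply is_ulim_const; auto.
Qed.

Lemma part5 (g : nat -> X -> Cx) (HU : UFt U) : rep_AcU d o U g ->
     fU U (sstar g) = (fun t => Cconj (fU U g t)).
Proof.
  intros H1. pose proof (linf_lim g HU (proj1 H1)) as L1.
  apply functional_extensionality; intro t; unfold fU at 1; apply ulim_spec; auto.
  apply is_ulim_conj; auto.
Qed.

End P.

Definition clamp (v : R) : R := Rmax 0 (Rmin 1 v).

Lemma clamp_lip a b : Rabs (clamp a - clamp b) <= Rabs (a - b).
Proof.
  unfold clamp, Rmax, Rmin. repeat destruct Rle_dec; unfold Rabs;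
  repeat destruct Rcase_abs; lra.
Qed.
Lemma clamp_bnd v : 0 <= clamp v <= 1.
Proof. unfold clamp, Rmax, Rmin. repeat destruct Rle_dec; lra. Qed.
Lemma clamp_0 v : v <= 0 -> clamp v = 0.
Proof. unfold clamp, Rmax, Rmin. repeat destruct Rle_dec; lra. Qed.
Lemma clamp_1 v : 1 <= v -> clamp v = 1.
Proof. unfold clamp, Rmax, Rmin. repeat destruct Rle_dec; lra. Qed.
Lemma clamp_abs v : Rabs (clamp v) <= 1.
Proof. pose proof (clamp_bnd v). rewrite Rabs_pos_eq; lra. Qed.

Lemma Rsc_1 z : Rsc 1 z = z.
Proof. destruct z; unfold Rsc; simpl; f_equal; ring. Qed.
Lemma Rsc_0 z : Rsc 0 z = C0.
Proof. destruct z; unfold Rsc, C0; simpl; f_equal; ring. Qed.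

Section Q.
Context {X : Type} (d : X -> X -> R) (o : X).

Lemma lip_o (Hm : is_metric d) (a : R) x y :
  Rabs ((a - d o x) - (a - d o y)) <= d x y /\ Rabs ((d o x - a) - (d o y - a)) <= d x y.
Proof.
  pose proof (d_tri d Hm o x y). pose proof (d_tri d Hm o y x). rewrite (d_sym d Hm y x) in H0.
  split; unfold Rabs; destruct Rcase_abs; lra.
Qed.

Lemma cont_Rsc (Hm : is_metric d) (c : X -> R) (g : X -> Cx) :
  continuous_fun d g -> (forall x y, Rabs (c x - c y) <= d x y) -> (forall x, Rabs (c x) <= 1) ->
  continuous_fun d (fun x => Rsc (c x) (g x)).
Proof.
  intros Hg Hl Hb x eps He.
  destruct (Hg x (eps / 2) ltac:(lra)) as [d1 [Hd1 H1]].
  pose proof (Cnorm_ge0 (g x)).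
  set (d2 := eps / (2 * (Cnorm (g x) + 1))).
  assert (0 < d2) by (unfold d2; apply Rdiv_lt_0_compat; lra).
  exists (Rmin d1 d2). split. apply Rmin_pos; lra.
  intros y Hy. pose proof (Rmin_l d1 d2). pose proof (Rmin_r d1 d2).
  replace (Csub (Rsc (c y) (g y)) (Rsc (c x) (g x))) with
    (Cadd (Rsc (c y) (Csub (g y) (g x))) (Rsc (c y - c x) (g x))).
  2:{ destruct (g y), (g x); unfold Rsc, Csub, Cadd, Copp; simpl; f_equal; ring. }
  eapply Rle_lt_trans; [apply Cnorm_add|]. rewrite !Cnorm_Rsc.
  specialize (H1 y ltac:(lra)). pose proof (Hb y). pose proof (Hl y x).
  rewrite (d_sym d Hm) in H5.
  pose proof (Cnorm_ge0 (Csub (g y) (g x))). pose proof (Rabs_pos (c y)).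
  pose proof (Rabs_pos (c y - c x)).
  assert (Rabs (c y) * Cnorm (Csub (g y) (g x)) <= 1 * Cnorm (Csub (g y) (g x)))
    by (apply Rmult_le_compat_r; lra).
  assert (Rabs (c y - c x) * Cnorm (g x) <= d2 * Cnorm (g x))
    by (apply Rmult_le_compat_r; lra).
  assert (d2 * Cnorm (g x) <= eps / 2).
  { unfold d2. apply (Rmult_le_reg_r (2 * (Cnorm (g x) + 1))). lra.
    field_simplify; nra. }
  lra.
Qed.

Lemma C0_Rsc (Hm : is_metric d) (c : X -> R) (g : X -> Cx) :
  in_C0 d g -> (forall x y, Rabs (c x - c y) <= d x y) -> (forall x, Rabs (c x) <= 1) ->
  in_C0 d (fun x => Rsc (c x) (g x)).
Proof.
  intros [Hg Hd] Hl Hb. split. apply cont_Rsc; auto.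
  intros eps He. destruct (Hd eps He) as [K [HK HKx]]. exists K. split; auto.
  intros x Hx. rewrite Cnorm_Rsc. specialize (HKx x Hx). pose proof (Hb x).
  pose proof (Cnorm_ge0 (g x)).
  assert (Rabs (c x) * Cnorm (g x) <= 1 * Cnorm (g x)) by (apply Rmult_le_compat_r; lra). lra.
Qed.

Lemma part6 (U : (nat -> Prop) -> Prop) (HU : UFt U) (Hp : is_proper_metric d) (h : X -> Cx) :
  in_Cb d h -> exists g, rep_AcU d o U g /\ fU U g = h.
Proof.
  intros [Hc [Mh HMh]]. destruct Hp as [Hm Hball].
  set (g := fun (n : nat) x => Rsc (clamp (INR n + 1 - d o x)) (h x)).
  assert (Hlin : in_linfA d g).
  { split.
    - intro n. split.
      + apply (cont_Rsc Hm (fun x => clamp (INR n + 1 - d o x))); auto.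
        intros x y. eapply Rle_trans; [apply clamp_lip| apply lip_o; auto].
        intro; apply clamp_abs.
      + intros eps He. exists (ball d o (INR n + 1)). split; auto.
        intros x Hx. unfold g. rewrite clamp_0. rewrite Rsc_0, Cnorm_C0; auto.
        unfold ball in Hx. lra.
    - exists Mh. intros n x. unfold g. rewrite Cnorm_Rsc. pose proof (clamp_abs (INR n + 1 - d o x)).
      pose proof (Cnorm_ge0 (h x)). pose proof (HMh x).
      assert (Rabs (clamp (INR n + 1 - d o x)) * Cnorm (h x) <= 1 * Cnorm (h x))
        by (apply Rmult_le_compat_r; lra). lra. }
  exists g. split.
  - split; auto. exists g. split; auto. split.
    + intros r eps Hr He. destruct (unif_cont d (ball d o r) h Hm (Hball o r) Hc eps He) as [delta [Hd Hu]].
      exists delta. split; auto. eapply U_mono; [auto|apply (U_geR U HU r)|].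
      intros n Hn s t Hs Ht Hst. unfold g. unfold ball in Hs, Ht.
      rewrite !clamp_1 by lra. rewrite !Rsc_1. apply Hu; auto.
    + intros e He. apply U_true; auto. intros n x. rewrite Csub_same, Cnorm_C0. lra.
  - apply functional_extensionality. intro t. unfold fU. apply ulim_spec; auto.
    apply is_ulim_ev; auto. eapply U_mono; [auto|apply (U_geR U HU (d o t))|].
    intros n Hn. unfold g. rewrite clamp_1 by lra. apply Rsc_1.
Qed.

Lemma part8 (U : (nat -> Prop) -> Prop) (HU : UFt U) (Hp : is_proper_metric d) (a : X -> Cx) :
  in_C0 d a -> rep_AcU d o U (fun _ => a) /\ fU U (fun _ => a) = a.
Proof.
  intros Ha. destruct Hp as [Hm Hball]. pose proof Ha as [Hc Hdec].
  assert (Hlin : in_linfA d (fun _ => a)).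
  { split; auto. destruct (Hdec 1 ltac:(lra)) as [K [HK HKx]].
    destruct (bdd_compact d K a Hm HK Hc) as [M HM].
    exists (Rmax M 1). intros n x. destruct (classic (K x)) as [Hx|Hx].
    - pose proof (HM x Hx). pose proof (Rmax_l M 1). lra.
    - pose proof (HKx x Hx). pose proof (Rmax_r M 1). lra. }
  split.
  - split; auto. exists (fun _ => a). split; auto. split.
    + intros r eps Hr He. destruct (unif_cont d (ball d o r) a Hm (Hball o r) Hc eps He) as [delta [Hd Hu]].
      exists delta. split; auto. apply U_true; auto.
    + intros e He. apply U_true; auto. intros n x. rewrite Csub_same, Cnorm_C0. lra.
  - apply functional_extensionality. intro t. unfold fU. apply ulim_spec; auto.
    apply is_ulim_const; auto.
Qed.
End Q.

Section K.
Context {X : Type} (d : X -> X -> R) (o : X) (U : (nat -> Prop) -> Prop).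

Lemma kernel_back (HU : UFt U) (g : nat -> X -> Cx) : rep_I d o U g -> fU U g = (fun _ => C0).
Proof.
  intros [_ [f [_ [Hue [r [Hr Hz]]]]]]. apply functional_extensionality. intro t.
  unfold fU. apply ulim_spec; auto.
  apply (is_ulim_ueq U HU _ (fun n => f n t)).
  { intros e He. eapply U_mono; [auto|apply (Hue e He)|]. intros n H. rewrite Cnorm_sub_sym. apply H. }
  apply is_ulim_ev; auto. eapply U_mono; [auto|apply (Hr (d o t))|]. intros n Hn. apply Hz. exact Hn.
Qed.

Lemma small_on_ball (HU : UFt U) (Hp : is_proper_metric d) (g : nat -> X -> Cx) :
  rep_AcU d o U g -> fU U g = (fun _ => C0) ->
  forall r eps, 0 < r -> 0 < eps -> U (fun n => forall x, ball d o r x -> Cnorm (g n x) <= eps).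
Proof.
  intros Hg H0 r eps Hr He. destruct Hp as [Hm Hball].
  pose proof (linf_lim d U g HU (proj1 Hg)) as Hl.
  destruct Hg as [_ [f [_ [Heq Hue]]]].
  destruct (Heq r (eps / 4) Hr ltac:(lra)) as [delta [Hd HE]].
  destruct (tot_bdd d (ball d o r) o Hm (Hball o r) delta Hd) as [L [HL1 HL2]].
  assert (HUL : U (fun n => forall c, In c L -> Cnorm (g n c) <= eps / 4)).
  { apply (U_list U HU L (fun c n => Cnorm (g n c) <= eps / 4)). intros c _.
    specialize (Hl c). rewrite H0 in Hl. eapply U_mono; [auto|apply (Hl (eps/4) ltac:(lra))|].
    intros n Hn. cbv beta in Hn. rewrite Csub_C0 in Hn. lra. }
  eapply U_mono; [auto|apply (U_and3 U HU _ _ _ HE (Hue (eps/4) ltac:(lra)) HUL)|].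
  intros n (H1&H2&H3) x Hx. destruct (HL2 x Hx) as [c [Hc Hxc]].
  specialize (H1 x c Hx (HL1 c Hc) Hxc). pose proof (H2 x). pose proof (H2 c).
  specialize (H3 c Hc).
  pose proof (Cnorm_sub_le (g n x) (g n c)).
  pose proof (Cnorm_sub_tri (g n x) (f n x) (g n c)).
  pose proof (Cnorm_sub_tri (f n x) (f n c) (g n c)).
  rewrite (Cnorm_sub_sym (g n x) (f n x)) in H6. lra.
Qed.

Lemma kernel_fwd (HU : UFt U) (Hp : is_proper_metric d) (g : nat -> X -> Cx) :
  rep_AcU d o U g -> fU U g = (fun _ => C0) -> rep_I d o U g.
Proof.
  intros Hg H0. pose proof (small_on_ball HU Hp g Hg H0) as Hs.
  pose proof Hp as [Hm _].
  set (A := fun (k n : nat) => forall x, ball d o (INR k + 1) x -> Cnorm (g n x) <= / (INR k + 1)).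
  assert (HA : forall k, U (A k)).
  { intro k. pose proof (pos_INR k). apply Hs. lra. apply Rinv_0_lt_compat; lra. }
  set (P := fun n k => (k <= n)%nat /\ forall j, (j <= k)%nat -> A j n).
  assert (HP : forall K, U (fun n => P n K)).
  { intro K. assert (HQ : U (fun n => forall j, (j <= K)%nat -> A j n)).
    { induction K.
      - eapply U_mono; [auto|apply (HA 0%nat)|]. intros n Hn j Hj.
        replace j with 0%nat by lia. auto.
      - eapply U_mono; [auto|apply (U_and U HU _ _ IHK (HA (S K)))|].
        intros n [H1 H2] j Hj. destruct (Nat.eq_dec j (S K)) as [->|Hne]; auto. apply H1. lia. }
    eapply U_mono; [auto|apply (U_and U HU _ _ (U_ge U HU K) HQ)|]. intros n [H1 H2]. split; auto. }
  assert (Pdown : forall n k j, P n k -> (j <= k)%nat -> P n j).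
  { intros n k j [H1 H2] Hjk. split. lia. intros i Hi. apply H2. lia. }
  set (kn := fun n => epsilon (inhabits 0%nat) (fun k => P n k /\ ~ P n (S k))).
  assert (Hkn : forall n K, P n K -> (K <= kn n)%nat /\ P n (kn n)).
  { intros n K HK.
    assert (Hex : exists k, P n k /\ ~ P n (S k)).
    { apply NNPP. intro Hn.
      assert (forall k, P n k). { induction k. apply (Pdown n K); auto. lia.
        apply NNPP. intro Hk. apply Hn. eauto. }
      destruct (H (S n)). lia. }
    pose proof (epsilon_spec (inhabits 0%nat) _ Hex) as [Hk1 Hk2]. fold (kn n) in Hk1, Hk2.
    split; auto. destruct (Compare_dec.le_lt_dec K (kn n)); auto. exfalso. apply Hk2. apply (Pdown n K); auto. }
  set (f := fun n x => Rsc (clamp (d o x - INR (kn n))) (g n x)).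
  assert (Hlin : in_linfA d f).
  { destruct Hg as [[HgC [M HM]] _]. split.
    - intro n. apply (C0_Rsc d Hm (fun x => clamp (d o x - INR (kn n)))); auto.
      intros x y. eapply Rle_trans; [apply clamp_lip| apply lip_o; auto].
      intro; apply clamp_abs.
    - exists M. intros n x. unfold f. rewrite Cnorm_Rsc. pose proof (clamp_abs (d o x - INR (kn n))).
      pose proof (Cnorm_ge0 (g n x)). pose proof (HM n x).
      assert (Rabs (clamp (d o x - INR (kn n))) * Cnorm (g n x) <= 1 * Cnorm (g n x))
        by (apply Rmult_le_compat_r; lra). lra. }
  split; [apply (proj1 Hg)|]. exists f. split; auto. split.
  - intros eps He. destruct (arch_inv eps He) as [K HK].
    eapply U_mono; [auto|apply (HP K)|]. intros n HPn x.
    destruct (Hkn n K HPn) as [HK1 [_ HK2]].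
    replace (Csub (f n x) (g n x)) with (Rsc (clamp (d o x - INR (kn n)) - 1) (g n x)).
    2:{ unfold f. destruct (g n x); unfold Rsc, Csub, Cadd, Copp; simpl; f_equal; ring. }
    rewrite Cnorm_Rsc. destruct (Rle_dec (d o x) (INR (kn n) + 1)) as [Hx|Hx].
    + specialize (HK2 (kn n) (le_n _) x Hx). specialize (HK (kn n) HK1).
      pose proof (clamp_bnd (d o x - INR (kn n))).
      assert (Rabs (clamp (d o x - INR (kn n)) - 1) <= 1) by (rewrite Rabs_left1; lra).
      pose proof (Cnorm_ge0 (g n x)). pose proof (Rabs_pos (clamp (d o x - INR (kn n)) - 1)).
      assert (Rabs (clamp (d o x - INR (kn n)) - 1) * Cnorm (g n x) <= 1 * Cnorm (g n x))
        by (apply Rmult_le_compat_r; lra). lra.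
    + rewrite clamp_1 by lra. replace (1 - 1) with 0 by ring. rewrite Rabs_R0. lra.
  - exists (fun n => INR (kn n)). split.
    + intro M. destruct (INR_unbounded M) as [K HK].
      eapply U_mono; [auto|apply (HP K)|]. intros n HPn.
      destruct (Hkn n K HPn) as [HK1 _]. apply le_INR in HK1. lra.
    + intros n x Hx. unfold f. unfold ball in Hx. rewrite clamp_0 by lra. apply Rsc_0.
Qed.
End K.

Theorem mainTheorem5 (X : Type) (d : X -> X -> R) (o : X)
  (U : (nat -> Prop) -> Prop) :
  is_proper_metric d ->
  is_nonprincipal_ultrafilter U ->
  (* the pointwise U-limits exist and f_U lies in C_b(X) *)
  (forall g, rep_AcU d o U g ->
     (forall t, is_ulim U (fun n => g n t) (fU U g t)) /\ in_Cb d (fU U g)) /\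
  (* well defined on classes *)
  (forall g1 g2, rep_AcU d o U g1 -> rep_AcU d o U g2 -> ueq U g1 g2 ->
     fU U g1 = fU U g2) /\
  (* *-homomorphism *)
  (forall g1 g2, rep_AcU d o U g1 -> rep_AcU d o U g2 ->
     fU U (sadd g1 g2) = (fun t => Cadd (fU U g1 t) (fU U g2 t)) /\
     fU U (smul g1 g2) = (fun t => Cmul (fU U g1 t) (fU U g2 t))) /\
  (forall (l : Cx) g, rep_AcU d o U g ->
     fU U (sscal l g) = (fun t => Cmul l (fU U g t))) /\
  (forall g, rep_AcU d o U g -> fU U (sstar g) = (fun t => Cconj (fU U g t))) /\
  (* surjective onto C_b(X) *)
  (forall h, in_Cb d h -> exists g, rep_AcU d o U g /\ fU U g = h) /\
  (* kernel is exactly I *)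
  (forall g, rep_AcU d o U g -> (fU U g = (fun _ => C0) <-> rep_I d o U g)) /\
  (* Phi(q(Delta a)) = a *)
  (forall a, in_C0 d a -> rep_AcU d o U (fun _ => a) /\ fU U (fun _ => a) = a).
Proof.
  intros Hp HU. pose proof Hp as [Hm _].
  split; [intros g Hg; apply (part1 d o U g HU Hm Hg)|].
  split; [intros g1 g2 H1 H2 H; apply (part2 d o U g1 g2 HU H1 H2 H)|].
  split; [intros g1 g2 H1 H2; apply (part3 d o U g1 g2 HU H1 H2)|].
  split; [intros l g H1; apply (part4 d o U l g HU H1)|].
  split; [intros g H1; apply (part5 d o U g HU H1)|].
  split; [intros h Hh; apply (part6 d o U HU Hp h Hh)|].
  split; [intros g Hg; split; [apply (kernel_fwd d o U HU Hp g Hg)|apply (kernel_back d o U HU g)]|].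
  intros a Ha. apply (part8 d o U HU Hp a Ha).
Qed.
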